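(* There exist absolute constants $C, C'>0$ such that the following holds. Let $n\ge 2$, $1\le k\le n/2$ and $d\ge 0$ be integers, let $\alpha=\lceil k\log(n/k)\rceil$, and let $t$ be an integer with $t\ge C\,(dk+k^2)\log(n/k)$ (so that in particular $\alpha\le t/(2d+1)$). Then the random $t\times n$ matrix $M$ produced by $\mathsf{RandMatrix}(t,n,d,k,\alpha)$ is $d$-runlength constrained, and with probability at least $1-C'/n$ it is $k$-disjunct. (In the paper's words: with $\alpha=k\log(n/k)$ and $t=\Theta(dk\log(n/k)+k^2\log(n/k))$, the output is a $k$-disjunct, $d$-runlength constrained matrix with probability at least $1-O(1/n)$.)
   Context: $\log$ denotes the base-2 logarithm. For a vector $x$, $\mathsf{supp}(x)$ is its support. A binary $t\times n$ matrix $M$ is $d$-runlength constrained if in every column, any two $1$'s are separated by a run of at least $d$ zeros, i.e. $M_{ij}=M_{i'j}=1$ with $i<i'$ implies $i'-i\ge d+1$. A binary matrix $M$ is $k$-disjunct if for every column $j$ and every set $S$ of at most $k$ columns with $j\notin S$, $\mathsf{supp}(M_{\cdot j})\not\subseteq\bigcup_{j'\in S}\mathsf{supp}(M_{\cdot j'})$. Procedure $\mathsf{RandMatrix}(t,n,d,k,\alpha)$ (requires $\alpha\le t/(2d+1)$): each column $M_{\cdot j}$, $j\in[n]$, is generated independently and identically as follows. Initialize the list $I=(1,2,\dots,t)$, viewed in cyclic order. Repeat $\alpha$ times: pick an index $i$ uniformly at random from $I$; set $M_{ij}=1$; let $U$ consist of $i$ together with the $d$ elements of $I$ immediately preceding $i$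 and the $d$ elements of $I$ immediately succeeding $i$ in the cyclic order of $I$; remove $U$ from $I$. All entries of column $j$ not set to $1$ are $0$. *)

(* Defs.v *)
From mathcomp Require Import all_boot.
From Stdlib Require Import Reals.
Set Implicit Arguments. Unset Strict Implicit. Unset Printing Implicit Defensive.

Definition log2 (x : R) : R := (ln x / ln 2)%R.

Definition bmatrix (t n : nat) := 'I_t -> 'I_n -> bool.
Definition runlength_constrained (t n d : nat) (M : bmatrix t n) : Prop :=
  forall (j : 'I_n) (i i' : 'I_t),
    M i j -> M i' j -> (i < i')%nat -> (d.+1 <= i' - i)%nat.

Definition supp_col (t n : nat) (M : bmatrix t n) (j : 'I_n) : {set 'I_t} :=
  [set i | M i j].

Definition k_disjunct (t n k : nat) (M : bmatrix t n) : bool :=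
  [forall j : 'I_n, forall S : {set 'I_n},
    ((#|S| <= k)%nat && (j \notin S)) ==>
    ~~ (supp_col M j \subset \bigcup_(j' in S) supp_col M j')].

(* ---- The procedure RandMatrix, as an explicit finite probability space ----
   Rows are numbered 0..t-1.  A column is generated from a sequence of
   positional choices: at each round, the current list L (in cyclic order)
   is indexed by a position p; the chosen row is L[p], which happens with
   probability 1/|L| (uniform choice from L); positions > |L|-1 have
   probability 0.  Then the elements at cyclic distance <= d from position p
   (i.e. p itself, the d preceding and the d succeeding elements) are removed. *)

Definition cyc_near (d m p q : nat) : bool :=
  ((q + m - p) %% m <= d)%nat || ((p + m - q) %% m <= d)%nat.

Definition remove_nbhd (d : nat) (L : seq nat) (p : nat) : seq nat :=
  [seq nth 0%nat L q | q <- iota 0 (size L) & ~~ cyc_near d (size L) p q].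

(* returns (list of rows set to 1, probability weight of this choice sequence) *)
Fixpoint run_column (d : nat) (L : seq nat) (ps : seq nat) : seq nat * R :=
  match ps with
  | [::] => ([::], 1%R)
  | p :: ps' =>
      let res := run_column d (remove_nbhd d L p) ps' in
      (nth 0%nat L p :: res.1,
       ((if (p < size L)%nat then / INR (size L) else 0) * res.2)%R)
  end.

(* an outcome of all the random choices: for each column j, alpha positions *)
Definition choices (t n alpha : nat) := {ffun 'I_n -> alpha.-tuple 'I_t}.

Definition col_choices (t n alpha : nat) (f : choices t n alpha) (j : 'I_n)
  : seq nat := map val (tval (f j)).

Definition weight (t n d alpha : nat) (f : choices t n alpha) : R :=
  \big[Rmult/1%R]_(j < n) (run_column d (iota 0 t) (col_choices f j)).2.

Definition rand_matrix (t n d alpha : nat) (f : choices t n alpha) : bmatrix t n :=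
  fun (i : 'I_t) (j : 'I_n) => ((i : nat) \in (run_column d (iota 0 t) (col_choices f j)).1).

Definition prob_RandMatrix (t n d alpha : nat) (E : bmatrix t n -> bool) : R :=
  \big[Rplus/0%R]_(f : choices t n alpha)
     (if E (rand_matrix d f) then weight d f else 0%R).
Arguments prob_RandMatrix : clear implicits.

(* Main.v *)
Require Import Defs.
From HB Require Import structures.
From mathcomp Require Import all_boot.
From Stdlib Require Import Reals Lra Lia.
From mathcomp Require Import zify.
Set Implicit Arguments. Unset Strict Implicit. Unset Printing Implicit Defensive.

Lemma count_inj_le (g : nat -> nat) (m d : nat) :
  {in iota 0 m &, injective g} ->
  (count (fun q => g q <= d) (iota 0 m) <= d.+1)%nat.
Proof.
move=> ginj.
rewrite -size_filter -(size_map g) -[d.+1](size_iota 0).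
apply: uniq_leq_size.
  rewrite map_inj_in_uniq ?filter_uniq ?iota_uniq //.
  by move=> x y; rewrite !mem_filter => /andP[_ hx] /andP[_ hy]; apply: ginj.
move=> x /mapP [q]; rewrite mem_filter => /andP[hq _] ->.
by rewrite mem_iota.
Qed.

Lemma remove_eq d L p : remove_nbhd d L p =
  map (nth 0 L) (filter (predC (cyc_near d (size L) p)) (iota 0 (size L))).
Proof. by []. Qed.

Lemma remove_subseq d L p : subseq (remove_nbhd d L p) L.
Proof.
rewrite remove_eq.
have e : L = map (nth 0 L) (iota 0 (size L)) by rewrite -/(mkseq _ _) mkseq_nth.
rewrite [X in subseq _ X]e.
by apply: map_subseq; apply: filter_subseq.
Qed.

Lemma remove_size d L p : (p < size L)%nat ->
  (size L <= size (remove_nbhd d L p) + (2 * d + 1))%nat.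
Proof.
move=> hp; rewrite remove_eq size_map size_filter.
set m := size L.
have := count_predC (cyc_near d m p) (iota 0 m); rewrite size_iota => hc.
suff : (count (cyc_near d m p) (iota 0 m) <= 2 * d + 1)%nat by lia.
have hU := count_predUI (fun q => (q + m - p) %% m <= d)%nat
   (fun q => (p + m - q) %% m <= d)%nat (iota 0 m).
have -> : count (cyc_near d m p) (iota 0 m) =
   count (predU (fun q => (q + m - p) %% m <= d)%nat
                (fun q => (p + m - q) %% m <= d)%nat) (iota 0 m) by [].
have h1 : (count (fun q => (q + m - p) %% m <= d)%nat (iota 0 m) <= d.+1)%nat.
  apply: count_inj_le => x y; rewrite !mem_iota /= !add0n => hx hy.
  move=> /eqP; rewrite -!addnBA ?(ltnW hp) // eqn_modDr.
  by rewrite !modn_small // => /eqP.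
have h2 : (count (fun q => (p + m - q) %% m <= d)%nat (iota 0 m) <= d.+1)%nat.
  apply: count_inj_le => x y; rewrite !mem_iota /= !add0n => hx hy.
  move=> /eqP h.
  have : ((p + m - x) + x + y == (p + m - y) + y + x %[mod m])%nat.
    by rewrite -!addnA [(y + x)%nat]addnC -modnDml (eqP h) modnDml.
  rewrite !subnK; try lia.
  by rewrite eqn_modDl !modn_small // => /eqP.
move: hU h1 h2.
set a := count _ _; set b := count _ _; set c := count _ _; set e := count _ _.
have hb : (0 < b)%nat.
  rewrite /b -has_count; apply/hasP; exists p; first by rewrite mem_iota.
  by rewrite /= addnC addnK modnn.
lia.
Qed.

Lemma sorted_gap (L : seq nat) p q : sorted ltn L -> (p <= q)%nat -> (q < size L)%nat ->
  (q - p <= nth 0 L q - nth 0 L p)%nat.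
Proof.
move=> sL; elim: q => [|q IH] hpq hq; first by rewrite leqn0 in hpq; rewrite (eqP hpq).
have [hlt|->] : (p <= q)%nat \/ p = q.+1 by lia.
2: by rewrite subnn.
have h1 := IH hlt (ltnW hq).
have h2 : (nth 0 L q < nth 0 L q.+1)%nat.
  by apply: (sorted_ltn_nth ltn_trans) => //; rewrite inE ?(ltnW hq).
have h3 : (nth 0 L p <= nth 0 L q)%nat.
  have [hpq'|->] : (p < q)%nat \/ p = q by lia.
  2: by [].
  by apply: ltnW; apply: (sorted_ltn_nth ltn_trans) => //; rewrite inE; lia.
lia.
Qed.

Lemma remove_far d L p z : sorted ltn L -> (p < size L)%nat -> z \in remove_nbhd d L p ->
  [/\ (nth 0 L p < z -> d < z - nth 0 L p)%nat,
      (z < nth 0 L p -> d < nth 0 L p - z)%nat & z != nth 0 L p].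
Proof.
move=> sL hp; rewrite remove_eq => /mapP [q]; rewrite mem_filter mem_iota /=.
set m := size L => /andP [hn hq] ->.
rewrite /cyc_near negb_or in hn; case/andP: hn; rewrite -!ltnNge => h1 h2.
have lt_nth : forall i j, (i < j)%nat -> (j < m)%nat -> (nth 0 L i < nth 0 L j)%nat.
  move=> i j hij hj; apply: (sorted_ltn_nth ltn_trans) => //; rewrite inE //; lia.
case: (ltngtP p q) => [hpq | hqp | hpq].
- have e : (q + m - p = (q - p) + m)%nat by lia.
  rewrite e modnDr modn_small in h1; last by lia.
  have g := sorted_gap sL (ltnW hpq) hq.
  have g2 := lt_nth _ _ hpq hq.
  split; [lia | lia | by rewrite neq_ltn g2 orbT].
- have e : (p + m - q = (p - q) + m)%nat by lia.
  rewrite e modnDr modn_small in h2; last by lia.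
  have g := sorted_gap sL (ltnW hqp) hp.
  have g2 := lt_nth _ _ hqp hp.
  split; [lia | lia | by rewrite neq_ltn g2].
- by rewrite hpq addnC addnK modnn in h2.
Qed.

Definition rows d L ps := (run_column d L ps).1.
Definition wt d L ps := (run_column d L ps).2.

Lemma wt_cons d L p ps : wt d L (p :: ps) =
  ((if (p < size L)%nat then / INR (size L) else 0) * wt d (remove_nbhd d L p) ps)%R.
Proof. by []. Qed.

Lemma rows_cons d L p ps : rows d L (p :: ps) = nth 0 L p :: rows d (remove_nbhd d L p) ps.
Proof. by []. Qed.

Lemma rows_in d L ps : wt d L ps <> 0%R -> {subset rows d L ps <= L}.
Proof.
elim: ps L => [|p ps IH] L //= hw x.
rewrite wt_cons in hw; case: ifP hw => hp hw; last by rewrite Rmult_0_l in hw.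
have hw' : wt d (remove_nbhd d L p) ps <> 0%R by move=> e; apply: hw; rewrite e Rmult_0_r.
rewrite rows_cons inE => /orP [/eqP -> | hx]; first by rewrite mem_nth.
exact: (mem_subseq (remove_subseq d L p) (IH _ hw' _ hx)).
Qed.

Lemma rows_sep d L ps : sorted ltn L -> wt d L ps <> 0%R ->
  forall x y, x \in rows d L ps -> y \in rows d L ps -> (x < y)%nat -> (d < y - x)%nat.
Proof.
elim: ps L => [|p ps IH] L //= sL hw.
rewrite wt_cons in hw; case: ifP hw => hp hw; last by rewrite Rmult_0_l in hw.
have hw' : wt d (remove_nbhd d L p) ps <> 0%R by move=> e; apply: hw; rewrite e Rmult_0_r.
have sL' : sorted ltn (remove_nbhd d L p) := subseq_sorted ltn_trans (remove_subseq d L p) sL.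
have far : forall z, z \in rows d (remove_nbhd d L p) ps -> _ :=
  fun z hz => remove_far sL hp (rows_in hw' hz).
move=> x y; rewrite !rows_cons !inE => /orP [/eqP -> | hx] /orP [/eqP -> | hy] hxy.
- by rewrite ltnn in hxy.
- by case: (far y hy) => a _ _; apply: a.
- by case: (far x hx) => _ a _; apply: a.
- exact: (IH _ sL' hw' x y hx hy hxy).
Qed.
Local Open Scope R_scope.
HB.instance Definition _ := Monoid.isComLaw.Build R 0 Rplus (fun x y z => esym (Rplus_assoc x y z)) Rplus_comm Rplus_0_l.
HB.instance Definition _ := Monoid.isComLaw.Build R 1 Rmult (fun x y z => esym (Rmult_assoc x y z)) Rmult_comm Rmult_1_l.
HB.instance Definition _ := Monoid.isMulLaw.Build R 0 Rmult Rmult_0_l Rmult_0_r.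
HB.instance Definition _ := Monoid.isAddLaw.Build R Rmult Rplus Rmult_plus_distr_r Rmult_plus_distr_l.

Lemma Rle_big (I : Type) (r : seq I) (P : pred I) (F G : I -> R) :
  (forall i, P i -> F i <= G i) ->
  \big[Rplus/0]_(i <- r | P i) F i <= \big[Rplus/0]_(i <- r | P i) G i.
Proof.
move=> h; apply: (big_ind2 (fun x y => x <= y)); [lra | | exact: h].
by move=> *; apply: Rplus_le_compat.
Qed.

Lemma big_ge0 (I : Type) (r : seq I) (P : pred I) (F : I -> R) :
  (forall i, P i -> 0 <= F i) -> 0 <= \big[Rplus/0]_(i <- r | P i) F i.
Proof.
move=> h; apply: (big_ind (fun x => 0 <= x)); [lra | | exact: h].
by move=> *; apply: Rplus_le_le_0_compat.
Qed.

Lemma sum_tuple_cons (T : finType) a (F : a.+1.-tuple T -> R) :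
  \big[Rplus/0]_(x : a.+1.-tuple T) F x =
  \big[Rplus/0]_(p : T) \big[Rplus/0]_(x : a.-tuple T) F [tuple of p :: x].
Proof.
rewrite pair_big /=.
rewrite (reindex (fun px : T * a.-tuple T => [tuple of px.1 :: px.2])) /=.
  by apply: eq_bigr => -[p x].
exists (fun y => (thead y, [tuple of behead y])).
  move=> [p x] _ /=; rewrite theadE; congr (_, _); exact: val_inj.
by move=> y _; rewrite [RHS]tuple_eta.
Qed.

Lemma sum_ord_if (t s : nat) (G : nat -> R) : (s <= t)%nat ->
  \big[Rplus/0]_(p < t) (if (p < s)%nat then G p else 0) = \big[Rplus/0]_(p < s) G p.
Proof. by move=> h; rewrite -big_mkcond (big_ord_widen t G h). Qed.

Lemma sum_count (I : eqType) (r : seq I) (P : pred I) :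
  \big[Rplus/0]_(i <- r) (if P i then 1 else 0) = INR (count P r).
Proof.
elim: r => [|x r IH]; first by rewrite big_nil.
rewrite big_cons IH /=; case: (P x); rewrite plus_INR /=; lra.
Qed.

Lemma sum_const_ord (s : nat) (c : R) : \big[Rplus/0]_(p < s) c = INR s * c.
Proof.
rewrite big_const_ord; elim: s => [|s IH]; first by rewrite /=; lra.
rewrite iterS IH S_INR; lra.
Qed.

Lemma wt_ge0 d L ps : 0 <= wt d L ps.
Proof.
elim: ps L => [|p ps IH] L /=; first by rewrite /wt /=; lra.
rewrite wt_cons; apply: Rmult_le_pos; last exact: IH.
case: ifP => hp; last lra.
apply: Rlt_le; apply: Rinv_0_lt_compat; apply: lt_0_INR; apply/ltP; lia.
Qed.

Lemma sum_tuple0 (T : finType) (F : 0.-tuple T -> R) :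
  \big[Rplus/0]_(x : 0.-tuple T) F x = F [tuple].
Proof.
rewrite (big_pred1 [tuple]) // => x; by rewrite /= [x]tuple0; apply/esym/eqP.
Qed.

Lemma wt_tcons d t a L (p : 'I_t) (x : a.-tuple 'I_t) :
  wt d L (map val [tuple of p :: x]) =
  (if (p < size L)%nat then / INR (size L) else 0) * wt d (remove_nbhd d L p) (map val x).
Proof. by []. Qed.

Lemma rows_tcons d t a L (p : 'I_t) (x : a.-tuple 'I_t) :
  rows d L (map val [tuple of p :: x]) =
  nth 0%nat L p :: rows d (remove_nbhd d L p) (map val x).
Proof. by []. Qed.

Lemma col_mass d t a L : (size L <= t)%nat ->
  ((0 < a)%nat -> (1 + a.-1 * (2 * d + 1) <= size L)%nat) ->
  \big[Rplus/0]_(x : a.-tuple 'I_t) wt d L (map val x) = 1.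
Proof.
elim: a L => [|a IH] L hL hs; first by rewrite sum_tuple0.
rewrite sum_tuple_cons.
have hs1 := hs isT; rewrite succnK in hs1.
rewrite (eq_bigr (fun p : 'I_t => if (p < size L)%nat then / INR (size L) else 0)); last first.
  move=> p _; under eq_bigr => x _ do rewrite wt_tcons.
  rewrite -big_distrr /=.
  case: ifP => hp; last lra.
  rewrite IH; first lra.
    exact: leq_trans (size_subseq (remove_subseq d L p)) hL.
  move=> ha; have := remove_size d hp; rewrite -subn1 mulnBl mul1n; have := leq_pmull (2*d+1) ha; lia.
rewrite (sum_ord_if (fun _ => / INR (size L))); last by lia.
rewrite sum_const_ord; field; apply: not_0_INR; lia.
Qed.

Lemma col_bound d t a (L : seq nat) m u (U : pred nat) : uniq L -> (size L <= t)%nat -> (0 < m)%nat ->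
  ((0 < a)%nat -> (m + a.-1 * (2 * d + 1) <= size L)%nat) ->
  (forall L' : seq nat, uniq L' -> (count U L' <= u)%nat) ->
  \big[Rplus/0]_(x : a.-tuple 'I_t)
     (wt d L (map val x) * (if all U (rows d L (map val x)) then 1 else 0))
  <= (INR u / INR m) ^ a.
Proof.
move=> uL hL hm hs hU.
have hm' : 0 < INR m by apply: lt_0_INR; apply/ltP.
have hu : 0 <= INR u by apply: pos_INR.
elim: a L uL hL hs => [|a IH] L uL hL hs.
  by rewrite sum_tuple0 /= /wt /=; lra.
have hs1 := hs isT; rewrite succnK in hs1.
set beta := (INR u / INR m) ^ a.
have hb : 0 <= beta by apply: pow_le; apply: Rmult_le_pos => //; apply: Rlt_le; apply: Rinv_0_lt_compat.
rewrite sum_tuple_cons.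
apply: (Rle_trans _ (\big[Rplus/0]_(p < t)
   (if (p < size L)%nat then / INR (size L) * (if U (nth 0%nat L p) then 1 else 0) * beta else 0))).
  apply: Rle_big => p _; under eq_bigr => x _ do rewrite wt_tcons rows_tcons /=.
  case: ifP => hp; last first.
    rewrite big1 => [|x _]; [apply: Rle_refl | by rewrite !Rmult_0_l].
  case: (U (nth 0%nat L p)) => /=; last first.
    rewrite big1 => [|x _]; [rewrite Rmult_0_r Rmult_0_l; apply: Rle_refl | by rewrite Rmult_0_r].
  under eq_bigr => x _ do rewrite Rmult_assoc.
  rewrite -big_distrr /= Rmult_1_r.
  apply: Rmult_le_compat_l; first by apply: Rlt_le; apply: Rinv_0_lt_compat;
    apply: lt_0_INR; apply/ltP; lia.
  apply: IH.
  - exact: subseq_uniq (remove_subseq d L p) uL.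
  - exact: leq_trans (size_subseq (remove_subseq d L p)) hL.
  - move=> ha; have := remove_size d hp; rewrite -subn1 mulnBl mul1n; have := leq_pmull (2*d+1) ha; lia.
rewrite (sum_ord_if (fun p => / INR (size L) * (if U (nth 0%nat L p) then 1 else 0) * beta));
  last by lia.
under eq_bigr => p _ do rewrite Rmult_assoc [_ * beta]Rmult_comm -Rmult_assoc.
rewrite -big_distrr /= -(big_mkord xpredT (fun p => if U (nth 0%nat L p) then 1 else 0)).
rewrite sum_count /index_iota subn0.
have -> : count (fun p => U (nth 0%nat L p)) (iota 0 (size L)) = count U L.
  by rewrite -count_map -/(mkseq _ _) mkseq_nth.
have hc : INR (count U L) <= INR u by apply: le_INR; apply/leP; apply: hU.
have hsL : INR m <= INR (size L) by apply: le_INR; apply/leP; lia.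
rewrite /= -/beta.
have hsp : 0 < INR (size L) by lra.
apply: Rle_trans (_ : / INR (size L) * beta * INR u <= _).
  apply: Rmult_le_compat_l => //; apply: Rmult_le_pos => //.
  by apply: Rlt_le; apply: Rinv_0_lt_compat.
rewrite /Rdiv.
have : / INR (size L) <= / INR m by apply: Rinv_le_contravar.
move=> hi.
have : 0 <= INR u * beta by apply: Rmult_le_pos.
nra.
Qed.

Section Cond.
Variables (I J : finType) (w : I -> J -> R) (j0 : I) (y0 : J).
Hypothesis w_ge0 : forall i y, 0 <= w i y.
Hypothesis w_sum : forall i, i != j0 -> \big[Rplus/0]_(y : J) w i y = 1.

Definition upd (f : {ffun I -> J}) (y : J) : {ffun I -> J} :=
  [ffun i => if i == j0 then y else f i].

Lemma prod_ge0 (r : seq I) (P : pred I) (F : I -> R) :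
  (forall i, 0 <= F i) -> 0 <= \big[Rmult/1]_(i <- r | P i) F i.
Proof.
move=> h; apply: (big_ind (fun x => 0 <= x)); [lra | | move=> *; apply: h].
by move=> *; apply: Rmult_le_pos.
Qed.

Lemma restA_sum :
  \big[Rplus/0]_(g : {ffun I -> J} | g j0 == y0)
     \big[Rmult/1]_(i | i != j0) w i (g i) = 1.
Proof.
pose F i y := if i == j0 then (if y == y0 then 1 else 0) else w i y.
have h1 : \big[Rmult/1]_(i : I) \big[Rplus/0]_(y : J) F i y = 1.
  rewrite big1 // => i _; rewrite /F; case: eqP => [_|/eqP hi]; last exact: w_sum.
  by rewrite -big_mkcond /= big_pred1_eq.
rewrite bigA_distr_bigA in h1; rewrite -[RHS]h1 [LHS]big_mkcond /=.
apply: eq_bigr => g _; rewrite [RHS](bigD1 j0) //= /F eqxx.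
case: eqP => _; first by rewrite Rmult_1_l; apply: eq_bigr => i /negPf ->.
by rewrite Rmult_0_l.
Qed.

Lemma cond_bound (P : {ffun I -> J} -> bool) (beta : R) :
  (forall f : {ffun I -> J},
     \big[Rplus/0]_(y : J) (w j0 y * (if P (upd f y) then 1 else 0)) <= beta) ->
  \big[Rplus/0]_(f : {ffun I -> J})
     ((\big[Rmult/1]_(i : I) w i (f i)) * (if P f then 1 else 0)) <= beta.
Proof.
move=> hb.
rewrite (partition_big (fun f : {ffun I -> J} => fun_of_fin f j0) xpredT) //=.
have e : forall y, \big[Rplus/0]_(f : {ffun I -> J} | true && (f j0 == y))
     ((\big[Rmult/1]_i w i (f i)) * (if P f then 1 else 0)) =
   \big[Rplus/0]_(g : {ffun I -> J} | g j0 == y0)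
     ((\big[Rmult/1]_(i | i != j0) w i (g i)) * (w j0 y * (if P (upd g y) then 1 else 0))).
  move=> y.
  rewrite (reindex_onto (fun g => upd g y) (fun f => upd f y0)) /=; last first.
    move=> f /eqP hf; apply/ffunP => i; rewrite !ffunE; case: eqP => // ->.
    by rewrite hf.
  apply: eq_big => [g|g /andP [_ hg]].
    rewrite /upd ffunE !eqxx /=; apply/eqP/eqP => [hg | hg].
      by rewrite -hg ffunE eqxx.
    apply/ffunP => i; rewrite !ffunE; case: eqP => // ->; by rewrite hg.
  rewrite (bigD1 j0) //= /upd ffunE eqxx.
  rewrite (eq_bigr (fun i => w i (g i))); last by move=> i /negPf hi; rewrite ffunE hi.
  lra.
rewrite (eq_bigr _ (fun y _ => e y)) exchange_big /=.
apply: Rle_trans (_ : \big[Rplus/0]_(g : {ffun I -> J} | g j0 == y0)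
     ((\big[Rmult/1]_(i | i != j0) w i (g i)) * beta) <= _).
  apply: Rle_big => g _; rewrite -big_distrr /=.
  by apply: Rmult_le_compat_l; [apply: prod_ge0 | apply: hb].
by rewrite -big_distrl /= restA_sum Rmult_1_l; apply: Rle_refl.
Qed.
End Cond.
Local Open Scope R_scope.

Lemma extend_set n k (j : 'I_n) (S : {set 'I_n}) :
  (#|S| <= k)%nat -> j \notin S -> (k < n)%nat ->
  exists S' : {set 'I_n}, [/\ S \subset S', #|S'| = k & j \notin S'].
Proof.
move=> hS hj hk.
move: {2}(k - #|S|)%nat (erefl (k - #|S|)%nat) => e.
elim: e S hS hj => [|e IH] S hS hj he.
  by exists S; split => //; move: hS he; set c := #|S|; lia.
have hc : (#|j |: S| < n)%nat. rewrite cardsU1 hj /=. move: hS he hk. set c := #|S|. lia.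
have : (0 < #|~: (j |: S)|)%nat.
  have := cardsC (j |: S); rewrite card_ord; move: hc; set a := #|j |: S|; set b := #|~: _|; lia.
case/card_gt0P => x; rewrite !inE negb_or => /andP [hxj hxS].
have e1 : (#|x |: S| <= k)%nat by rewrite cardsU1 hxS /=; move: hS he; set c := #|S|; lia.
have e2 : j \notin x |: S by rewrite !inE negb_or eq_sym hxj.
have e3 : (k - #|x |: S|)%nat = e by rewrite cardsU1 hxS /=; move: hS he; set c := #|S|; lia.
have [S' [h1 h2 h3]] := IH (x |: S) e1 e2 e3.
by exists S'; split => //; apply: subset_trans h1; apply: subsetUr.
Qed.

Lemma size_rows d L ps : size (rows d L ps) = size ps.
Proof. by elim: ps L => // p ps IH L; rewrite rows_cons /= IH. Qed.

Lemma rows_lt d t L ps : (0 < t)%nat -> all (fun r => r < t)%nat L ->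
  all (fun r => r < t)%nat (rows d L ps).
Proof.
move=> ht; elim: ps L => [|p ps IH] L hL //.
rewrite rows_cons /= IH ?andbT.
  case: (ltnP p (size L)) => hp; first exact: (allP hL _ (mem_nth 0%nat hp)).
  by rewrite nth_default.
apply/allP => x hx; apply: (allP hL); exact: (mem_subseq (remove_subseq d L p) hx).
Qed.

Lemma sumn_const (T : Type) (s : seq T) (c : nat) : sumn [seq c | _ <- s] = (size s * c)%nat.
Proof. by elim: s => //= _ s ->; rewrite mulSn. Qed.

Lemma bigcup_mono n (T : finType) (F : 'I_n -> {set T}) (A B : {set 'I_n}) :
  A \subset B -> \bigcup_(j in A) F j \subset \bigcup_(j in B) F j.
Proof.
move=> hAB; apply/subsetP => x /bigcupP [j hj hx]; apply/bigcupP; exists j => //.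
exact: (subsetP hAB).
Qed.

Section Main.
Variables (t n d alpha k : nat).
Hypotheses (ht : (0 < t)%nat) (ha : (0 < alpha)%nat) (hat : (alpha * (2 * d + 1) <= t)%nat)
  (hkn : (k < n)%nat).

Definition mm := (t - alpha.-1 * (2 * d + 1))%nat.

Lemma mm_gt0 : (0 < mm)%nat.
Proof.
rewrite /mm -subn1 mulnBl mul1n; have := leq_pmull (2*d+1) ha; lia.
Qed.

Definition cw (x : alpha.-tuple 'I_t) := wt d (iota 0 t) (map val x).

Lemma weightE (f : choices t n alpha) : weight d f = \big[Rmult/1]_(j < n) cw (f j).
Proof. by []. Qed.

Lemma cw_ge0 x : 0 <= cw x.
Proof. exact: wt_ge0. Qed.

Lemma cw_sum : \big[Rplus/0]_(x : alpha.-tuple 'I_t) cw x = 1.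
Proof.
apply: col_mass; first by rewrite size_iota.
move=> _; rewrite size_iota -subn1 mulnBl mul1n; have := leq_pmull (2*d+1) ha; lia.
Qed.

Lemma total_mass : \big[Rplus/0]_(f : choices t n alpha) weight d f = 1.
Proof.
transitivity (\big[Rplus/0]_(f : {ffun 'I_n -> alpha.-tuple 'I_t})
   \big[Rmult/1]_(i : 'I_n) cw (f i)); first by [].
rewrite -(bigA_distr_bigA (fun (_ : 'I_n) (x : alpha.-tuple 'I_t) => cw x)) /=.
by rewrite big1 // => j _; exact: cw_sum.
Qed.

Definition Ev (f : choices t n alpha) (j : 'I_n) (S : {set 'I_n}) : bool :=
  supp_col (rand_matrix d f) j \subset \bigcup_(j' in S) supp_col (rand_matrix d f) j'.

Lemma fail_ind (f : choices t n alpha) :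
  (if k_disjunct k (rand_matrix d f) then 0 else 1) <=
  \big[Rplus/0]_(j : 'I_n) \big[Rplus/0]_(S : {set 'I_n} | (#|S| == k) && (j \notin S))
     (if Ev f j S then 1 else 0).
Proof.
have pos : forall j, 0 <= \big[Rplus/0]_(S : {set 'I_n} | (#|S| == k) && (j \notin S))
     (if Ev f j S then 1 else 0).
  by move=> j; apply: big_ge0 => S _; case: ifP => _; lra.
case: ifP => hd; first by apply: big_ge0 => j _; apply: pos.
move/negbT: hd; rewrite /k_disjunct negb_forall => /existsP [j].
rewrite negb_forall => /existsP [S]; rewrite negb_imply negbK => /andP [/andP [hS hjS] hsub].
have [S' [h1 h2 h3]] := extend_set hS hjS hkn.
rewrite (bigD1 j) //=.
apply: (Rle_trans _ (1 + 0)); first lra.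
apply: Rplus_le_compat; last by apply: big_ge0 => i _; apply: pos.
rewrite (bigD1 S') /=; last by rewrite h2 eqxx h3.
have -> : Ev f j S'.
  by apply: subset_trans hsub _; apply: bigcup_mono.
apply: (Rle_trans _ (1 + 0)); first lra.
apply: Rplus_le_compat; first lra.
by apply: big_ge0 => i _; case: ifP => _; lra.
Qed.

Definition beta := (INR (k * alpha) / INR mm) ^ alpha.

Lemma Ev_rows (f : choices t n alpha) (j : 'I_n) (S : {set 'I_n}) (y : alpha.-tuple 'I_t) :
  j \notin S ->
  Ev (upd j f y) j S ->
  all (fun r => r \in flatten [seq rows d (iota 0 t) (map val (f j')) | j' <- enum S])
      (rows d (iota 0 t) (map val y)).
Proof.
move=> hjS hE; apply/allP => r hr.
have hlt : (r < t)%nat.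
  have := rows_lt d (map val y) ht (L := iota 0 t).
  have -> : all (fun r0 => r0 < t)%nat (iota 0 t) by apply/allP => z; rewrite mem_iota.
  by move=> /(_ isT) /allP; apply.
pose i := Ordinal hlt.
have hi : i \in supp_col (rand_matrix d (upd j f y)) j.
  by rewrite inE /rand_matrix /col_choices /upd ffunE eqxx.
have := subsetP hE i hi; case/bigcupP => j' hj' hi'.
have hjj : (j' == j) = false by apply/negbTE; apply: contraNneq hjS => <-.
rewrite inE /rand_matrix /col_choices /upd ffunE hjj in hi'.
apply/flatten_mapP; exists j'; first by rewrite mem_enum.
exact: hi'.
Qed.

Lemma size_Us (f : choices t n alpha) (S : {set 'I_n}) :
  size (flatten [seq rows d (iota 0 t) (map val (f j')) | j' <- enum S]) = (#|S| * alpha)%nat.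
Proof.
rewrite size_flatten /shape -map_comp.
rewrite (eq_map (g := fun _ => alpha)); last first.
  by move=> j' /=; rewrite size_rows size_map size_tuple.
by rewrite sumn_const cardE.
Qed.

Lemma E_bound (j : 'I_n) (S : {set 'I_n}) : j \notin S -> #|S| = k ->
  \big[Rplus/0]_(f : choices t n alpha) (weight d f * (if Ev f j S then 1 else 0)) <= beta.
Proof.
move=> hjS hS.
pose y0 : alpha.-tuple 'I_t := [tuple of nseq alpha (Ordinal ht)].
transitivity (\big[Rplus/0]_(f : {ffun 'I_n -> alpha.-tuple 'I_t})
   ((\big[Rmult/1]_(i : 'I_n) cw (f i)) * (if Ev f j S then 1 else 0))); first reflexivity.
apply: (cond_bound (w := fun _ => cw) (j0 := j) y0).
- by move=> *; apply: cw_ge0.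
- by move=> *; apply: cw_sum.
move=> f.
pose Us := flatten [seq rows d (iota 0 t) (map val (f j')) | j' <- enum S].
apply: (Rle_trans _ (\big[Rplus/0]_(y : alpha.-tuple 'I_t)
   (wt d (iota 0 t) (map val y) * (if all (fun r => r \in Us) (rows d (iota 0 t) (map val y)) then 1 else 0)))).
  apply: Rle_big => y _.
  case: ifP => hE; last by rewrite Rmult_0_r; apply: Rmult_le_pos; [apply: cw_ge0 | case: ifP => _; lra].
  by rewrite (Ev_rows hjS hE); apply: Rle_refl.
apply: col_bound => //.
- exact: iota_uniq.
- by rewrite size_iota.
- exact: mm_gt0.
- by move=> _; rewrite size_iota /mm; have := leq_pmull (2*d+1) ha; rewrite -subn1 mulnBl mul1n; lia.
- move=> L' uL'; rewrite -size_filter -hS -(size_Us f S).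
  apply: uniq_leq_size; first exact: filter_uniq.
  by move=> z; rewrite mem_filter => /andP [].
Qed.

Lemma beta_ge0 : 0 <= beta.
Proof.
apply: pow_le; apply: Rmult_le_pos; first exact: pos_INR.
apply: Rlt_le; apply: Rinv_0_lt_compat; apply: lt_0_INR; apply/ltP; exact: mm_gt0.
Qed.

Lemma weight_ge0 (f : choices t n alpha) : 0 <= weight d f.
Proof. by rewrite weightE; apply: prod_ge0 => i; apply: cw_ge0. Qed.

Lemma sum_const_pred (T : finType) (P : pred T) (c : R) :
  \big[Rplus/0]_(i | P i) c = INR #|P| * c.
Proof.
rewrite big_const; elim: #|P| => [|s IH]; first by rewrite /=; lra.
rewrite iterS IH S_INR; lra.
Qed.

Lemma prob_bound :
  prob_RandMatrix t n d alpha (k_disjunct k) >= 1 - INR n * (INR 'C(n, k) * beta).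
Proof.
rewrite /prob_RandMatrix.
have hsplit : \big[Rplus/0]_(f : choices t n alpha)
     (if k_disjunct k (rand_matrix d f) then weight d f else 0) +
   \big[Rplus/0]_(f : choices t n alpha)
     (weight d f * (if k_disjunct k (rand_matrix d f) then 0 else 1)) = 1.
  rewrite -big_split -[RHS]total_mass; apply: eq_bigr => f _; simpl; case: ifP => _; lra.
suff hfail : \big[Rplus/0]_(f : choices t n alpha)
     (weight d f * (if k_disjunct k (rand_matrix d f) then 0 else 1))
     <= INR n * (INR 'C(n, k) * beta) by lra.
apply: (Rle_trans _ (\big[Rplus/0]_(f : choices t n alpha) (weight d f *
  \big[Rplus/0]_(j : 'I_n) \big[Rplus/0]_(S : {set 'I_n} | (#|S| == k) && (j \notin S))
     (if Ev f j S then 1 else 0)))).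
  apply: Rle_big => f _; apply: Rmult_le_compat_l; [exact: weight_ge0 | exact: fail_ind].
under eq_bigr => f _ do rewrite big_distrr /=.
rewrite exchange_big /=.
apply: (Rle_trans _ (\big[Rplus/0]_(j : 'I_n) (INR 'C(n, k) * beta))); last first.
  by rewrite sum_const_ord; apply: Rle_refl.
apply: Rle_big => j _.
under eq_bigr => f _ do rewrite big_distrr /=.
rewrite exchange_big /=.
apply: (Rle_trans _ (\big[Rplus/0]_(S : {set 'I_n} | (#|S| == k) && (j \notin S)) beta)).
  by apply: Rle_big => S /andP [/eqP hS hj]; apply: E_bound.
apply: (Rle_trans _ (\big[Rplus/0]_(S : {set 'I_n} | #|S| == k) beta)).
  rewrite big_mkcond [X in _ <= X]big_mkcond /=; apply: Rle_big => S _.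
  have := beta_ge0; case: (#|S| == k); case: (j \notin S) => /=; lra.
rewrite sum_const_pred.
have -> : #|(fun S : {set 'I_n} => #|S| == k)| = 'C(n, k).
  by rewrite -cardsE card_draws card_ord.
apply: Rle_refl.
Qed.
End Main.
Local Open Scope R_scope.

Lemma ln_le_mono x y : 0 < x -> x <= y -> ln x <= ln y.
Proof.
move=> hx hxy; case: (Req_dec x y) => [->|ne]; first lra.
apply: Rlt_le; apply: ln_increasing _ _ hx _; lra.
Qed.

Lemma ln_le_inv x y : 0 < x -> 0 < y -> ln x <= ln y -> x <= y.
Proof.
move=> hx hy h; case: (Rle_lt_dec x y) => // hlt.
have := ln_increasing _ _ hy hlt; lra.
Qed.

Lemma ln_1x x : 0 < x -> ln (1 + x) <= x.
Proof.
move=> hx; have h := exp_ineq1 x ltac:(lra).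
rewrite -{2}(ln_exp x); apply: ln_le_mono; lra.
Qed.

Lemma INR_expn m n : INR (expn m n) = INR m ^ n.
Proof. by elim: n => [|n IH] //; rewrite expnS mult_INR IH. Qed.

Lemma pow_succ_le (k : nat) : (0 < k)%nat -> INR (expn k.+1 k) <= 3 * INR (expn k k).
Proof.
move=> hk.
have hk' : 0 < INR k by apply: lt_0_INR; apply/ltP.
rewrite !INR_expn.
have e : INR k.+1 = INR k * (1 + / INR k) by rewrite S_INR; field; lra.
rewrite e Rpow_mult_distr.
have hp : 0 < INR k ^ k by apply: pow_lt.
suff : (1 + / INR k) ^ k <= 3 by nra.
apply: Rle_trans exp_le_3.
have hpos : 0 < (1 + / INR k) ^ k by apply: pow_lt; have := Rinv_0_lt_compat _ hk'; lra.
apply: ln_le_inv => //; first exact: exp_pos.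
rewrite ln_exp ln_pow; last by have := Rinv_0_lt_compat _ hk'; lra.
have := ln_1x (Rinv_0_lt_compat _ hk').
move=> h; apply: Rle_trans (_ : INR k * / INR k <= _).
  by apply: Rmult_le_compat_l; lra.
rewrite Rinv_r; lra.
Qed.

Lemma kk_fact (k : nat) : (expn k k <= expn 3 k * k`!)%nat.
Proof.
elim: k => [|k IH] //.
case: k IH => [|k] IH; first by [].
have h := pow_succ_le (isT : (0 < k.+1)%nat).
have h' : (expn k.+2 k.+1 <= 3 * expn k.+1 k.+1)%nat.
  have e3 : 3 = INR 3 by simpl; lra.
  by rewrite e3 -mult_INR in h; move/INR_le/leP: h.
rewrite (expnS k.+2) (expnS 3) factS.
have h1 := leq_mul (leqnn k.+2) h'.
have h2 := leq_mul (leqnn (3 * k.+2)) IH.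
move: h1 h2; set A := expn k.+2 k.+1; set B := expn k.+1 k.+1; set F := (k.+1`!)%nat; set P := expn 3 k.+1.
nia.
Qed.

Lemma leq_expb a b e : (a <= b)%nat -> (expn a e <= expn b e)%nat.
Proof. by move=> h; elim: e => // e IH; rewrite !expnS leq_mul. Qed.

Lemma ffact_le_pow n k : (n ^_ k <= expn n k)%nat.
Proof.
elim: k n => [|k IH] n //.
rewrite ffactnS expnS; apply: leq_mul => //.
apply: leq_trans (IH _) _; apply: leq_expb; exact: leq_pred.
Qed.

Lemma binom_kk n k : ('C(n, k) * expn k k <= expn 4 k * expn n k)%nat.
Proof.
have h1 := kk_fact k.
have h2 : (expn 3 k <= expn 4 k)%nat by apply: leq_expb.
have h3 : ('C(n, k) * k`! <= expn n k)%nat by rewrite bin_ffact; apply: ffact_le_pow.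
apply: leq_trans (leq_mul (leqnn 'C(n, k)) (leq_trans h1 (leq_mul h2 (leqnn k`!)))) _.
rewrite mulnCA; apply: leq_mul => //.
Qed.

Lemma nk2 n k : (1 <= k)%nat -> (2 * k <= n)%nat -> (n * expn k (2 * k) <= expn n (2 * k))%nat.
Proof.
move=> hk hn.
have e : (2 * k = (2 * k).-1.+1)%nat by rewrite prednK //; lia.
rewrite e !expnS; apply: leq_mul => //.
set j := (2 * k).-1.
have hj : (k <= j)%nat by rewrite /j; lia.
have h2 : (k < expn 2 j)%nat by apply: leq_trans (ltn_expl j (isT : (1 < 2)%nat)); lia.
apply: leq_trans (_ : expn (2 * k) j <= _)%nat; last by apply: leq_expb.
rewrite expnMn; apply: leq_mul; [exact: ltnW | exact: leqnn].
Qed.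

Lemma key_nat n k a m : (1 <= k)%nat -> (2 * k <= n)%nat -> (512 * (k * a) <= m)%nat ->
  (expn n k <= expn k k * expn 2 a)%nat ->
  (n * n * 'C(n, k) * expn (k * a) a <= expn m a)%nat.
Proof.
move=> hk hn hm h2.
have ha : ('C(n, k) * expn k (3 * k) <= expn n (3 * k))%nat.
  have hb : (expn 4 k * expn k (2 * k) <= expn n (2 * k))%nat.
    have -> : (expn 4 k * expn k (2 * k) = expn (2 * k) (2 * k))%nat.
      by rewrite expnMn (expnM 2) (_ : expn 2 2 = 4%nat).
    by apply: leq_expb.
  have e3 : (expn k (3 * k) = expn k k * expn k (2 * k))%nat by rewrite -expnD; congr expn; lia.
  have e3' : (expn n (3 * k) = expn n k * expn n (2 * k))%nat by rewrite -expnD; congr expn; lia.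
  rewrite e3 e3' mulnA.
  apply: leq_trans (leq_mul (binom_kk n k) (leqnn _)) _.
  rewrite mulnAC [X in (_ <= X)%nat]mulnC; exact: leq_mul.
have hc := nk2 hk hn.
have hd : (expn n 3 * expn k (6 * k) <= expn n (6 * k))%nat.
  have := leq_expb 3 hc; rewrite expnMn -!expnM.
  by rewrite (_ : (2 * k * 3 = 6 * k)%nat); last lia.
have he : (n * n * 'C(n, k) * expn k (9 * k) <= expn n (9 * k))%nat.
  have e9 : (expn k (9 * k) = expn k (3 * k) * expn k (6 * k))%nat by rewrite -expnD; congr expn; lia.
  have e9' : (expn n (9 * k) = expn n (3 * k) * expn n (6 * k))%nat by rewrite -expnD; congr expn; lia.
  have hn3 : (n * n <= expn n 3)%nat.
    have -> : expn n 3 = (n * n * n)%nat by rewrite !expnS expn0 muln1 mulnA.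
    by apply: leq_pmulr; lia.
  rewrite e9 e9'.
  apply: leq_trans (_ : ('C(n, k) * expn k (3 * k)) * (expn n 3 * expn k (6 * k)) <= _)%nat.
    rewrite [X in (X <= _)%nat](_ : _ = ('C(n, k) * expn k (3 * k)) * ((n * n) * expn k (6 * k)))%nat; last first.
      by move: ('C(n, k)) (expn k (3 * k)) (expn k (6 * k)) => A B D; nia.
    by apply: leq_mul => //; apply: leq_mul.
  exact: leq_mul.
have hf : (n * n * 'C(n, k) <= expn 512 a)%nat.
  have h9 := leq_expb 9 h2.
  rewrite expnMn -!expnM in h9.
  have : (n * n * 'C(n, k) * expn k (9 * k) <= expn k (9 * k) * expn 512 a)%nat.
    apply: leq_trans he _.
    rewrite (_ : 9 * k = k * 9)%nat; last lia.
    apply: leq_trans h9 _; rewrite (_ : 512 = expn 2 9)%nat // -expnM (mulnC 9%nat a).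
    by [].
  rewrite [X in (_ <= X)%nat]mulnC leq_pmul2r //.
  by rewrite expn_gt0; lia.
apply: leq_trans (leq_mul hf (leqnn _)) _.
rewrite -expnMn; apply: leq_expb.
exact: hm.
Qed.
Local Open Scope R_scope.

Lemma le_div c a b : 0 < b -> c * b <= a -> c <= a / b.
Proof.
move=> hb h.
have hi : 0 < / b by apply: Rinv_0_lt_compat.
have := Rmult_le_compat_r _ _ _ (Rlt_le _ _ hi) h.
by rewrite Rmult_assoc Rinv_r; [rewrite Rmult_1_r | lra].
Qed.

Lemma log2_ge1 n k : (1 <= k)%nat -> (2 * k <= n)%nat -> 1 <= log2 (INR n / INR k).
Proof.
move=> hk hn.
have hk' : 1 <= INR k by apply: (le_INR 1); apply/leP.
have hn' : 2 * INR k <= INR n by rewrite -(mult_INR 2); apply: le_INR; apply/leP.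
have hq : 2 <= INR n / INR k by apply: le_div; lra.
have hl2 : 0 < ln 2 by have := ln_lt_2; lra.
have := ln_le_mono (ltac:(lra) : 0 < 2) hq.
rewrite /log2 => h; apply: le_div => //; lra.
Qed.

Lemma H2_real n k a : (1 <= k)%nat -> (2 * k <= n)%nat ->
  INR k * log2 (INR n / INR k) <= INR a -> (expn n k <= expn k k * expn 2 a)%nat.
Proof.
move=> hk hn h.
have hk' : 0 < INR k by apply: lt_0_INR; apply/ltP.
have hn' : 0 < INR n by apply: lt_0_INR; apply/ltP; lia.
have hq : 0 < INR n / INR k by apply: Rdiv_lt_0_compat.
have hl2 : 0 < ln 2 by have := ln_lt_2; lra.
have h1 : (INR n / INR k) ^ k <= 2 ^ a.
  apply: ln_le_inv; [exact: pow_lt | apply: pow_lt; lra |].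
  rewrite !ln_pow //; last lra.
  move: h; rewrite /log2 => h.
  have : INR k * (ln (INR n / INR k) / ln 2) * ln 2 <= INR a * ln 2 by apply: Rmult_le_compat_r; lra.
  by rewrite Rmult_assoc /Rdiv Rmult_assoc Rinv_l; lra.
rewrite /Rdiv Rpow_mult_distr pow_inv in h1.
have hkk : 0 < INR k ^ k by apply: pow_lt.
have h3 : INR n ^ k <= INR k ^ k * 2 ^ a.
  have := Rmult_le_compat_l _ _ _ (Rlt_le _ _ hkk) h1.
  by rewrite Rmult_comm Rmult_assoc Rinv_l; lra.
apply/leP; apply: INR_le; rewrite mult_INR !INR_expn.
by rewrite (_ : INR 2 = 2) //.
Qed.

Lemma H1_real n k d a t : (1 <= k)%nat -> (2 * k <= n)%nat ->
  INR a - 1 < INR k * log2 (INR n / INR k) <= INR a ->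
  INR t >= 2048 * (INR d * INR k + INR k ^ 2) * log2 (INR n / INR k) ->
  (512 * (k * a) + a * (2 * d + 1) <= t)%nat /\ (1 <= a)%nat.
Proof.
move=> hk hn [ha1 ha2] ht.
have hL := log2_ge1 hk hn.
set L := log2 (INR n / INR k) in ha1 ha2 ht hL.
have hK : 1 <= INR k by apply: (le_INR 1); apply/leP.
have hD : 0 <= INR d by apply: pos_INR.
have hKL : 1 <= INR k * L by nra.
have hA1 : 1 <= INR a by lra.
split; last first.
  case: a hA1 {ha1 ha2} => [|a] //=; lra.
have hA2 : INR a <= 2 * (INR k * L) by lra.
have f1 : INR k * INR a <= INR k * (2 * (INR k * L)) by apply: Rmult_le_compat_l; lra.
have f2 : INR a * (2 * INR d + 1) <= 2 * (INR k * L) * (2 * INR d + 1)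
  by apply: Rmult_le_compat_r; lra.
have f3 : INR k * L <= INR k * INR k * L.
  have : INR k * 1 <= INR k * INR k by apply: Rmult_le_compat_l; lra.
  move=> h; have := Rmult_le_compat_r _ _ _ (ltac:(lra) : 0 <= L) h; lra.
have f4 : 0 <= INR d * INR k * L by apply: Rmult_le_pos; [apply: Rmult_le_pos|]; lra.
have goal : 512 * (INR k * INR a) + INR a * (2 * INR d + 1) <= INR t by nra.
apply/leP; apply: INR_le.
rewrite plus_INR !mult_INR plus_INR mult_INR.
have e512 : INR 512 = 512 by rewrite INR_IZR_INZ.
have e2 : INR 2 = 2 by [].
have e1 : INR 1 = 1 by [].
rewrite e512 e2 e1; lra.
Qed.

Close Scope R_scope.

Theorem theorem1 :
  exists C C' : R, (0 < C)%R /\ (0 < C')%R /\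
  forall (n k d alpha t : nat),
    (2 <= n)%nat -> (1 <= k)%nat -> (2 * k <= n)%nat ->
    (* alpha = ceil (k log2 (n/k)) *)
    (INR alpha - 1 < INR k * log2 (INR n / INR k) <= INR alpha)%R ->
    (INR t >= C * (INR d * INR k + INR k ^ 2) * log2 (INR n / INR k))%R ->
    (alpha * (2 * d + 1) <= t)%nat /\
    (forall f : choices t n alpha, weight d f <> 0%R ->
        runlength_constrained d (rand_matrix d f)) /\
    (prob_RandMatrix t n d alpha
        (k_disjunct k) >= 1 - C' / INR n)%R.
Proof.
exists 2048%R, 1%R; split; first lra; split; first lra.
move=> n k d alpha t hn hk hkn ha ht.
have [h1 ha1] := H1_real hk hkn ha ht.
have hat : (alpha * (2 * d + 1) <= t)%nat by lia.
split => //.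
split.
  move=> f hw j i i' hi hi' hlt.
  have hcw : cw d (f j) <> 0%R.
    move=> e; apply: hw; rewrite weightE (bigD1 j) //= e; lra.
  exact: (rows_sep (iota_ltn_sorted 0 t) hcw hi hi' hlt).
have ht0 : (0 < t)%nat by lia.
have hkn' : (k < n)%nat by lia.
have hp := prob_bound ht0 ha1 hat hkn'.
have h512 : (512 * (k * alpha) <= mm t d alpha)%nat.
  rewrite /mm -subn1 mulnBl mul1n; have := leq_pmull (2*d+1) ha1; lia.
have h2 := H2_real hk hkn (proj2 ha).
have hkey := key_nat hk hkn h512 h2.
have hN : (0 < INR n)%R by apply: lt_0_INR; apply/ltP; lia.
have hmm : (0 < mm t d alpha)%nat by rewrite /mm -subn1 mulnBl mul1n; have := leq_pmull (2*d+1) ha1; lia.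
have hY : (0 < INR (expn (mm t d alpha) alpha))%R.
  by apply: lt_0_INR; apply/ltP; rewrite expn_gt0 hmm.
have eb : beta t d alpha k =
    (INR (expn (k * alpha) alpha) * / INR (expn (mm t d alpha) alpha))%R.
  by rewrite /beta /Rdiv Rpow_mult_distr pow_inv !INR_expn.
have hz : (INR n * INR n * INR 'C(n, k) * INR (expn (k * alpha) alpha)
           <= INR (expn (mm t d alpha) alpha))%R.
  by rewrite -!mult_INR; apply: le_INR; apply/leP.
suff : (INR n * (INR 'C(n, k) * beta t d alpha k) <= 1 / INR n)%R by lra.
rewrite eb.
set Z := (INR n * INR n * INR 'C(n, k) * INR (expn (k * alpha) alpha))%R in hz.
set Y := INR (expn (mm t d alpha) alpha) in hY hz *.
have -> : (INR n * (INR 'C(n, k) * (INR (expn (k * alpha) alpha) * / Y)) = Z * / Y * / INR n)%R.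
  rewrite /Z; field; lra.
have -> : (1 / INR n = Y * / Y * / INR n)%R by field; lra.
apply: Rmult_le_compat_r; first by apply: Rlt_le; apply: Rinv_0_lt_compat.
apply: Rmult_le_compat_r => //; by apply: Rlt_le; apply: Rinv_0_lt_compat.
Qed.
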